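(* Let $\zeta\equiv\Phi$ or $\zeta\equiv1$, $t\ge0$, $n\in\mathbb N^*$, and $(x_1,\dots,x_n)\in\Delta_{(n)}\cap((0,t]\times\mathbb{R}_+)^n$, $x_i=(t_i,\theta_i)$. Then $$c_n^{\zeta,t}(x_1,\dots,x_n)=c_n^{\zeta,t}(x_1,\dots,x_n)\,\mathbf 1_{\{\theta_1\le\mu\}}\prod_{i=2}^n\mathbf 1_{\{\theta_i\le\mu+\sum_{j=1}^{i-1}\Phi(t_i-t_j)\}}.$$
   Context: Let $\mu>0$ and $\Phi:\mathbb{R}_+\to\mathbb{R}_+$ integrable with $\int_0^\infty\Phi<1$. Let $\mathbb X=\mathbb{R}_+\times\mathbb{R}_+$, points $x=(t,\theta)$, and $\Delta_{(n)}:=\{((t_1,\theta_1),\dots,(t_n,\theta_n))\in\mathbb X^n: t_1<\dots<t_n\}$. Let $\Omega$ be the space of configurations $\omega=\sum_i\delta_{x_i}$ on $\mathbb X$ with $\mathbb P$ the Poisson measure making the canonical measure $N(\omega)=\omega$ a Poisson random measure of intensity $dt\,d\theta$. Let $\lambda$ be the unique pathwise solution of $\lambda_t=\mu+\int_{(0,t)\times\mathbb{R}_+}\Phi(t-s)\mathbf 1_{\{\theta\le\lambda_s\}}N(ds,d\theta)$, and for $\zeta\in\{\Phi,1\}$ set $X^\zeta_t:=\int_{(0,t)\times\mathbb{R}_+}\zeta(t-s)\mathbf 1_{\{\theta\le\lambda_s\}}N(ds,d\theta)$. For $x_1,\dots,x_n$ with $t_1<\dots<t_n$ and a functional $F$ of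 $\omega$, $\mathcal D^n_{(x_1,\dots,x_n)}F:=\sum_{J\subset\{x_1,\dots,x_n\}}(-1)^{n-|J|}F(\sum_{y\in J}\delta_y)$. Define $c_n^{\zeta,t}(x_1,\dots,x_n):=\mathcal D^n_{(x_{(1)},\dots,x_{(n)})}X^\zeta_t$, where $(x_{(1)},\dots,x_{(n)})$ is the reordering by increasing time coordinate. *)

(* Defs.v *)
From HB Require Import structures.
From mathcomp Require Import all_boot all_order all_algebra.
From mathcomp Require Import all_classical all_reals all_analysis.
Set Implicit Arguments. Unset Strict Implicit. Unset Printing Implicit Defensive.
Import Order.TTheory GRing.Theory Num.Theory.
Local Open Scope ring_scope.

(* A (finite) configuration omega = sum_i delta_{x_i} on X = R_+ x R_+ is
   represented by the sequence of its atoms x_i = (t_i, theta_i). *)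
Definition config (R : realType) := seq (R * R).

(* Integral of a function g against the counting measure N(omega) over
   (0,t) x R_+ : sum over the atoms (s,theta) with 0 < s < t and theta >= 0. *)
Definition Nint (R : realType) (omega : config R) (t : R)
  (g : R -> R -> R) : R :=
  \sum_(p <- omega | (0 < p.1 < t) && (0 <= p.2)) g p.1 p.2.

Definition is_intensity (R : realType) (mu : R) (Phi : R -> R)
  (lam : config R -> R -> R) : Prop :=
  forall (omega : config R) (t : R),
    lam omega t = mu + Nint omega t
      (fun s theta => Phi (t - s) * (nat_of_bool (theta <= lam omega s)%R)%:R).

Definition Xzeta (R : realType) (lam : config R -> R -> R) (zeta : R -> R)
  (t : R) (omega : config R) : R :=
  Nint omega t (fun s theta => zeta (t - s) * (nat_of_bool (theta <= lam omega s)%R)%:R).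

Definition Dn (R : realType) (n : nat) (F : config R -> R)
  (x : 'I_n -> R * R) : R :=
  \sum_(J : {set 'I_n}) (-1) ^+ (n - #|J|) * F [seq x i | i <- enum J].

(* c_n^{zeta,t}(x_1..x_n) for x already ordered by increasing time
   (so the reordering x_(1),...,x_(n) is the identity). *)
Definition cn (R : realType) (lam : config R -> R -> R) (zeta : R -> R)
  (t : R) (n : nat) (x : 'I_n -> R * R) : R :=
  Dn (Xzeta lam zeta t) x.

(* Main.v *)
Require Import Defs.
From HB Require Import structures.
From mathcomp Require Import all_boot all_order all_algebra.
From mathcomp Require Import all_classical all_reals all_analysis.
From mathcomp Require Import zify lra.
Import Order.TTheory GRing.Theory Num.Theory.
Local Open Scope ring_scope.

Lemma count_split (T : Type) (a b : pred T) (s : seq T) :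
  count a s = (count (predI a b) s + count (predI a (predC b)) s)%N.
Proof. elim: s => //= y s ->; case: (a y); case: (b y) => /=; lia. Qed.

Lemma lam_remove (R : realType) (mu : R) (Phi : R -> R)
  (lam : config R -> R -> R) (Hl : is_intensity mu Phi lam)
  (w1 w2 : config R) (a : R * R) :
  perm_eq w1 (a :: w2) -> ~~ (a.2 <= lam w1 a.1) ->
  forall s, lam w1 s = lam w2 s.
Proof.
move=> Hp Ha.
suff H : forall k s, (count (fun p : R * R => (p.1 < s)%R) w1 < k)%N -> lam w1 s = lam w2 s.
  by move=> s; apply: (H _ s (ltnSn _)).
elim=> [//|k IH] s Hk.
rewrite !Hl; congr (_ + _).
rewrite /Nint (perm_big _ Hp) big_cons /=.
have -> : Phi (s - a.1) * (nat_of_bool (a.2 <= lam w1 a.1))%:R = 0.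
  by rewrite (negbTE Ha) mulr0.
rewrite add0r if_same big_seq_cond [RHS]big_seq_cond.
apply: eq_bigr => p /andP [pw /andP [/andP [p0 ps] _]].
rewrite IH //.
have pw1 : p \in w1 by rewrite (perm_mem Hp) in_cons pw orbT.
rewrite (count_split _ _ (fun q : R * R => q.1 < p.1)) in Hk.
have E : count (fun p0 : R * R => p0.1 < p.1) w1 =
   count (predI (fun p0 : R * R => p0.1 < s) (fun q : R * R => q.1 < p.1)) w1.
  apply: eq_count => q /=; case: ltP => h; rewrite ?andbT ?andbF //; symmetry; exact: lt_trans h ps.
have : (0 < count (predI (fun p0 : R * R => (p0.1 < s)%R)
     (predC (fun q : R * R => (q.1 < p.1)%R))) w1)%N.
  rewrite -has_count; apply/hasP; by exists p; rewrite /= ?ps ?ltxx.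
move=> h; suff: (count (fun p0 : R*R => (p0.1 < p.1)%R) w1 < k)%N by [].
rewrite E; lia.
Qed.

Lemma X_remove (R : realType) (mu : R) (Phi : R -> R)
  (lam : config R -> R -> R) (Hl : is_intensity mu Phi lam) zeta t
  (w1 w2 : config R) (a : R * R) :
  perm_eq w1 (a :: w2) -> ~~ (a.2 <= lam w1 a.1) ->
  Xzeta lam zeta t w1 = Xzeta lam zeta t w2.
Proof.
move=> Hp Ha.
rewrite /Xzeta /Nint (perm_big _ Hp) big_cons /=.
have -> : zeta (t - a.1) * (nat_of_bool (a.2 <= lam w1 a.1))%:R = 0.
  by rewrite (negbTE Ha) mulr0.
rewrite add0r if_same.
apply: eq_bigr => p _; by rewrite (@lam_remove _ _ _ _ Hl _ _ _ Hp Ha).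
Qed.

Theorem lemma5p1 (R : realType) (mu : R) (Phi : R -> R)
  (lam : config R -> R -> R) (zeta : R -> R) (t : R) (n : nat)
  (x : 'I_n -> R * R) :
  0 < mu ->
  (forall s, 0 <= s -> 0 <= Phi s) ->
  (lebesgue_measure : set R -> \bar R).-integrable
     `[0%R, +oo[%classic (fun s => (Phi s)%:E) ->
  (\int[lebesgue_measure]_(s in `[0%R, +oo[%classic) (Phi s)%:E < 1%:E)%E ->
  is_intensity mu Phi lam ->
  (zeta = Phi \/ zeta = (fun _ => 1)) ->
  0 <= t -> (0 < n)%N ->
  (forall i j : 'I_n, (i < j)%N -> (x i).1 < (x j).1) ->
  (forall i : 'I_n, 0 < (x i).1 <= t /\ 0 <= (x i).2) ->
  cn lam zeta t x =
    cn lam zeta t x *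
    \prod_(i < n)
      (nat_of_bool ((x i).2 <= mu + \sum_(j < n | (j < i)%N) Phi ((x i).1 - (x j).1))%R)%:R.
Proof.
move=> _ Phi0 _ _ Hl _ _ _ Hinc Hx.
case: (boolP [forall i : 'I_n, (x i).2 <= mu + \sum_(j < n | (j < i)%N) Phi ((x i).1 - (x j).1)]) => [/forallP Hall|].
  by rewrite big1 ?mulr1 // => i _; rewrite Hall.
move/forallPn => [i Hi].
rewrite -ltNge in Hi.
suff -> : cn lam zeta t x = 0 by rewrite mul0r.
set F := Xzeta lam zeta t.
have key : forall J : {set 'I_n}, i \in J ->
    F [seq x k | k <- enum J] = F [seq x k | k <- enum (J :\ i)].
  move=> J iJ; apply: (@X_remove _ _ _ _ Hl _ _ _ _ (x i)).
    change (perm_eq (map x (enum J)) (map x (i :: enum (J :\ i)))).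
    apply: perm_map; apply: uniq_perm.
    - exact: enum_uniq.
    - by rewrite /= mem_enum in_setD1 eqxx /= enum_uniq.
    - move=> k; rewrite in_cons !mem_enum in_setD1.
      by case: eqP => [->|].
  rewrite -ltNge; apply: le_lt_trans Hi.
  rewrite Hl lerD2l /Nint big_map big_mkcond /=.
  apply: (@le_trans _ _ (\sum_(k <- enum J) (if (x k).1 < (x i).1 then Phi ((x i).1 - (x k).1) else 0))).
    apply: ler_sum => k _.
    case: ifP => [/andP [/andP [_ h] _]|_]; last by case: ifP => // h; apply: Phi0; rewrite subr_ge0 ltW.
    rewrite h; have := Phi0 ((x i).1 - (x k).1); rewrite subr_ge0 ltW // => /(_ isT) p0.
    by case: ((x k).2 <= _)%R; rewrite /= ?mulr1 ?mulr0.
  rewrite big_enum /= big_mkcond /= [X in _ <= X]big_mkcond /=.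
  apply: ler_sum => k _.
  have E : ((x k).1 < (x i).1) = (k < i)%N.
    case: (ltnP k i) => h; first by apply: Hinc.
    apply/negbTE; rewrite -leNgt; case: (ltnP i k) => h2; first exact/ltW/Hinc.
    have -> : k = i by apply: val_inj; apply/eqP; rewrite eqn_leq h h2.
    by [].
  rewrite E; case: (boolP (k < i)%N) => h; case: ifP => _ //.
  by apply: Phi0; rewrite subr_ge0; apply: ltW; rewrite E.
pose tog (J : {set 'I_n}) := if i \in J then J :\ i else i |: J.
have togK : involutive tog.
  move=> A; rewrite /tog; case iA: (i \in A).
    by rewrite in_setD1 eqxx /= finset.setD1K.
  by rewrite in_setU1 eqxx /= finset.setU1K // iA.
rewrite /cn /Dn -/F.
set S := \sum_(J : {set 'I_n}) _.
have : S = - S.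
  rewrite {1}/S (reindex_inj (inv_inj togK)) -sumrN; apply: eq_bigr => J _.
  have cardJ : forall A : {set 'I_n}, (#|A| <= n)%N.
    by move=> A; have := max_card A; rewrite card_ord.
  rewrite /tog; case: ifP => iJ.
    rewrite -key // -mulNr; congr (_ * _).
    have := cardsD1 i J; rewrite iJ => h; have := cardJ J.
    rewrite h => hc.
    rewrite /= ?add1n in hc *. rewrite -(subnSK hc) exprS mulN1r //.
  have iU : i \in i |: J by rewrite !inE eqxx.
  rewrite key // finset.setU1K ?iJ // -mulNr; congr (_ * _).
  have := cardsU1 i J; rewrite iJ /= => h; have := cardJ (i |: J).
  rewrite h => hc.
  rewrite /= ?add1n in hc *. rewrite -(subnSK hc).
  by rewrite exprS mulN1r opprK.
move=> h; lra.
Qed.
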